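(* For every $k\in\{1,\dots,n-1\}$, every $v\in\wedge^k H_1$ and every generator $\sigma_t\in B_n$ ($1\le t\le n-1$), \[\psi_k(\sigma_t\cdot v)=q^{k-1}\,\sigma_t\cdot\psi_k(v),\] where on the left $\sigma_t$ acts diagonally on $\wedge^kH_1$, i.e. $\sigma_t\cdot(x_1\wedge\cdots\wedge x_k)=(\sigma_t\cdot x_1)\wedge\cdots\wedge(\sigma_t\cdot x_k)$, and on the right $\sigma_t$ acts on $H_k\subset V^{\otimes n}$ via $\Phi$.
   Context: Let $U=U_q(\mathfrak{gl}(1|1))$ be the unital superalgebra over $\mathbb{C}(q)$ generated by odd elements $E,F$ and even elements $\mathbf q^h$ ($h\in P^*=\mathbb{Z}h_1\oplus\mathbb{Z}h_2$) with relations $\mathbf q^0=1$, $\mathbf q^h\mathbf q^{h'}=\mathbf q^{h+h'}$, $\mathbf q^hE=q^{\langle h,\alpha\rangle}E\mathbf q^h$, $\mathbf q^hF=q^{-\langle h,\alpha\rangle}F\mathbf q^h$, $EF+FE=\frac{K-K^{-1}}{q-q^{-1}}$ with $K=\mathbf q^{h_1+h_2}$, $E^2=F^2=0$; here $P=\mathbb{Z}\epsilon_1\oplus\mathbb{Z}\epsilon_2$ with $\{\epsilon_1,\epsilon_2\}$ dual to $\{h_1,h_2\}$ and $\alpha=\epsilon_1-\epsilon_2$. Comultiplication: $\Delta(E)=E\otimes K^{-1}+1\otimes E$, $\Delta(F)=F\otimes1+K\otimes F$, $\Delta(\mathbf q^h)=\mathbf q^h\otimes\mathbf q^h$; on tensor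 products one uses the Koszul sign rule $(X\otimes Y)(a\otimes b)=(-1)^{|Y||a|}Xa\otimes Yb$. $V$ has basis $v_0$ (even), $v_1$ (odd) with $Ev_0=0,Ev_1=v_0,Fv_0=v_1,Fv_1=0$, $\mathbf q^hv_0=q^{\langle h,\epsilon_1\rangle}v_0$, $\mathbf q^hv_1=q^{\langle h,\epsilon_2\rangle}v_1$. Fix $n\ge2$; $U$ acts on $V^{\otimes n}$ via iterated comultiplication. For $0\le k\le n-1$, $H_k=\{v\in V^{\otimes n}: Ev=0,\ \mathbf q^hv=q^{\langle h,(n-k)\epsilon_1+k\epsilon_2\rangle}v\ \forall h\in P^*\}$. Braid action: $\check R:V\otimes V\to V\otimes V$ is given by $\check R(v_0\otimes v_0)=qv_0\otimes v_0$, $\check R(v_1\otimes v_0)=v_0\otimes v_1$, $\check R(v_0\otimes v_1)=v_1\otimes v_0+(q-q^{-1})v_0\otimes v_1$, $\check R(v_1\otimes v_1)=-q^{-1}v_1\otimes v_1$; $\Phi(\sigma_t)=\mathrm{id}^{\otimes(t-1)}\otimes\check R\otimes\mathrm{id}^{\otimes(n-t-1)}$ defines an action $\Phi$ of $B_n$ on $V^{\otimes n}$ commuting with $U$, hence preserving each $H_k$; write $\sigma\cdot v=\Phi(\sigma)v$. For $1\le i\le n-1$ let $e_i=v_0^{\otimes(i-1)}\otimes(q^{-1}v_0\otimes v_1-v_1\otimes v_0)\otimes v_0^{\otimes(n-1-i)}$; these form a basis of $H_1$. For $1\le i\le n$ let $w_i=v_0^{\otimes(i-1)}\otimes v_1\otimes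 v_0^{\otimes(n-i)}$ and $U'=\mathrm{span}\{w_i\}$; note $e_i=-w_i+q^{-1}w_{i+1}$, so $H_1\subset U'$. Let $\psi:\wedge^*U'\to V^{\otimes n}$ be the $\mathbb{C}(q)$-linear map with $\psi(w_{i_1}\wedge\cdots\wedge w_{i_k})=v_{\alpha_1}\otimes\cdots\otimes v_{\alpha_n}$ for $i_1<\cdots<i_k$, where $\alpha_j=1$ if $j\in\{i_1,\dots,i_k\}$ and $\alpha_j=0$ otherwise. $\psi_k$ is the restriction of $\psi$ to $\wedge^kH_1$; it is an isomorphism $\wedge^kH_1\to H_k$. *)

(* Defs.v *)
From HB Require Import structures.
From mathcomp Require Import all_boot all_order all_algebra.
From mathcomp Require Import fraction.
From mathcomp Require Import complex.
From mathcomp Require Import Rstruct.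

Set Implicit Arguments.
Unset Strict Implicit.
Unset Printing Implicit Defensive.

Import Order.TTheory GRing.Theory Num.Theory.
Local Open Scope ring_scope.

Notation idx n := {ffun 'I_n -> bool}.
Notation tensor F n := {ffun {ffun 'I_n -> bool} -> F^o}.
Notation ext F n := {ffun {set 'I_n} -> F^o}.

Section Model.
Variables (F : fieldType) (q : F) (n : nat).
Local Notation idx := (idx n).
Local Notation tensor := (tensor F n).
Local Notation ext := (ext F n).

(* Basis of V^{(x)n}: v_{alpha_1} (x) ... (x) v_{alpha_n}, alpha : 'I_n -> bool
   (true = v_1, false = v_0).  Positions are 0-indexed: position j of the
   paper (1-indexed) is the ordinal of value j-1. *)

Definition basisT (a : idx) : tensor := [ffun b => (b == a)%:R].

(* bit of alpha at a (0-indexed, nat) position; false if out of range *)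
Definition bitn (a : idx) (m : nat) : bool := [exists i : 'I_n, (val i == m) && a i].

Definition swapn (m : nat) (a : idx) : idx :=
  [ffun i : 'I_n => if val i == m then bitn a m.+1
                    else if val i == m.+1 then bitn a m else a i].

(* Rcheck applied at tensor positions t, t+1 (1-indexed), i.e. 0-indexed
   t-1, t, on the basis vector e_alpha *)
Definition Rcheck_basis (t : nat) (a : idx) : tensor :=
  match bitn a t.-1, bitn a t with
  | false, false => q *: basisT a
  | true, false => basisT (swapn t.-1 a)
  | false, true => basisT (swapn t.-1 a) + (q - q^-1) *: basisT a
  | true, true => (- q^-1) *: basisT a
  end.

(* Phi(sigma_t) = id^{t-1} (x) Rcheck (x) id^{n-t-1}, extended linearly *)
Definition Phi (t : nat) (x : tensor) : tensor :=
  \sum_(a : idx) x a *: Rcheck_basis t a.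

(* Action of E on V^{(x)n} via the iterated coproduct
   sum_j 1^{(x) j} (x) E (x) (K^{-1})^{(x) (n-1-j)}, with Koszul signs;
   K acts by q on V. *)
Definition ones_before (a : idx) (j : 'I_n) : nat := #|[set i : 'I_n | (i < j)%N && a i]|.

Definition clear (a : idx) (j : 'I_n) : idx := [ffun i => if i == j then false else a i].

Definition E_basis (a : idx) : tensor :=
  \sum_(j : 'I_n | a j)
     ((-1) ^+ ones_before a j * q ^- (n.-1 - j)) *: basisT (clear a j).

Definition Eop (x : tensor) : tensor := \sum_(a : idx) x a *: E_basis a.

Definition nzeros (a : idx) : nat := #|[set i | ~~ a i]|.
Definition nones (a : idx) : nat := #|[set i | a i]|.

(* H_k = { v | E v = 0, q^h v = q^<h,(n-k) eps_1 + k eps_2> v for all h in P^* },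
   h = c1 h_1 + c2 h_2; q^h acts on e_alpha by q^(c1 * #zeros + c2 * #ones). *)
Definition inH (k : nat) (x : tensor) : Prop :=
  Eop x = 0 /\
  forall (c1 c2 : int) (a : idx),
    q ^ (c1 * (nzeros a)%:Z + c2 * (nones a)%:Z) * x a
    = q ^ (c1 * (n%:Z - k%:Z) + c2 * k%:Z) * x a.

(* U' = span { w_i }, w_i = e_{delta_i}; coordinate of x on w_i *)
Definition delta (i : 'I_n) : idx := [ffun j => j == i].
Definition coordU (x : tensor) (i : 'I_n) : F := x (delta i).

(* The exterior algebra wedge^* U', with basis w_I = w_{i_1} /\ ... /\ w_{i_k}
   (i_1 < ... < i_k) indexed by subsets I of 'I_n. *)

(* x_1 /\ ... /\ x_k for x_j in U': the coefficient on w_I (#|I| = k,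
   I = {i_1 < ... < i_k}) is det (coordU x_j i_l)_{j,l}. *)
Definition wedge (k : nat) (x : 'I_k -> tensor) : ext :=
  [ffun I : {set 'I_n} =>
     match #|I| =P k return F^o with
     | ReflectT e =>
         \det (\matrix_(j < k, l < k) coordU (x j) (enum_val (cast_ord (esym e) l)))
     | ReflectF _ => 0
     end].

(* psi(w_I) = v_{alpha_1} (x) ... (x) v_{alpha_n}, alpha = indicator of I *)
Definition psi (v : ext) : tensor := [ffun a : idx => v [set i | a i]].

End Model.

Definition Cq : fieldType := {fraction {poly (Rdefinitions.R)[i]}}.
Definition qC : Cq := FracField.tofrac ('X : {poly (Rdefinitions.R)[i]}).

(* Main.v *)
Require Import Defs.
From HB Require Import structures.
From mathcomp Require Import all_boot all_order all_algebra.
From mathcomp Require Import fraction complex Rstruct.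
From mathcomp Require Import perm zify ring.
Import GRing.Theory.
Local Open Scope ring_scope.
Set Implicit Arguments.
Unset Strict Implicit.

Lemma bitnE n (a : idx n) (i : 'I_n) : bitn a i = a i.
Proof.
apply/existsP/idP => [[i' /andP[/eqP h ai]]|ai].
  by have -> : i = i' by apply: val_inj.
by exists i; rewrite eqxx.
Qed.

Lemma srt n (S : {set 'I_n}) : sorted (fun i j : 'I_n => (i < j)%N) (enum S).
Proof.
rewrite /enum_mem -enumT.
apply: sorted_filter; first by move=> a b c; apply: ltn_trans.
have := iota_ltn_sorted 0 n; rewrite -val_enum_ord sorted_map. done.
Qed.

Lemma srt_ord k : sorted (fun i j : 'I_k => (i < j)%N) (enum 'I_k).
Proof. have := iota_ltn_sorted 0 k; rewrite -val_enum_ord sorted_map. done. Qed.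

Lemma enum_incr n (S : {set 'I_n}) k (e : #|S| = k) (l1 l2 : 'I_k) :
  (l1 < l2)%N ->
  (enum_val (cast_ord (esym e) l1) < enum_val (cast_ord (esym e) l2))%N.
Proof.
move=> lt12.
have x0 : 'I_n := enum_val (cast_ord (esym e) l1).
rewrite !(enum_val_nth x0).
apply: (sorted_ltn_nth (leT := fun i j : 'I_n => (i < j)%N)) => //.
- by move=> a b c; apply: ltn_trans.
- exact: srt.
- by rewrite inE /= -cardE e.
- by rewrite inE /= -cardE e.
Qed.

Lemma enum_char n (S : {set 'I_n}) k (e : #|S| = k) (h : 'I_k -> 'I_n) :
  (forall l, h l \in S) -> (forall l1 l2 : 'I_k, (l1 < l2)%N -> (h l1 < h l2)%N) ->
  forall l, h l = enum_val (cast_ord (esym e) l).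
Proof.
move=> hS hm l.
have ltT : transitive (fun i j : 'I_n => (i < j)%N) by move=> a b c; apply: ltn_trans.
have s1s : sorted (fun i j : 'I_n => (i < j)%N) (map h (enum 'I_k)).
  rewrite sorted_map; apply: sub_sorted (srt_ord k) => a b /=; exact: hm.
have u1 : uniq (map h (enum 'I_k)).
  by apply: (sorted_uniq ltT) => // a; rewrite /= ltnn.
have [_ eqs] : ((size (map h (enum 'I_k)) = size (enum S)) * (map h (enum 'I_k) =i enum S))%type.
  apply: uniq_min_size => //.
    by move=> y /mapP[l' _ ->]; rewrite mem_enum.
  by rewrite size_map size_enum_ord -cardE e.
have E : map h (enum 'I_k) = enum S.
  apply: (irr_sorted_eq ltT) => //; first by move=> a; rewrite /= ltnn.
  exact: srt.
rewrite (enum_val_nth (h l)) -E /= (nth_map l) ?size_enum_ord //.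
by rewrite nth_ord_enum.
Qed.

Lemma det_col_lin (F : fieldType) k (X X1 X2 : 'M[F]_k) l0 (b c : F) :
  (forall j, X j l0 = b * X1 j l0 + c * X2 j l0) ->
  (forall j l, l != l0 -> X1 j l = X j l) ->
  (forall j l, l != l0 -> X2 j l = X j l) ->
  \det X = b * \det X1 + c * \det X2.
Proof.
move=> h0 h1 h2.
rewrite -det_tr -(det_tr X1) -(det_tr X2).
apply: (determinant_multilinear (i0 := l0)).
- by apply/rowP => j; rewrite !mxE h0.
- by apply/matrixP => i j; rewrite !mxE h1 // eq_sym neq_lift.
- by apply/matrixP => i j; rewrite !mxE h2 // eq_sym neq_lift.
Qed.


Definition sw n (P P1 : 'I_n) (a : idx n) : idx n := [ffun i => a (tperm P P1 i)].

Lemma swK n (P P1 : 'I_n) a : sw P P1 (sw P P1 a) = a.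
Proof. by apply/ffunP => i; rewrite !ffunE tpermK. Qed.

Lemma swapnE n (P P1 : 'I_n) a : val P1 = (val P).+1 -> swapn (val P) a = sw P P1 a.
Proof.
move=> hP; apply/ffunP => i; rewrite !ffunE.
case: (tpermP P P1 i) => [->|->|h1 h2].
- by rewrite eqxx -hP bitnE.
- by rewrite hP eqn_leq ltnn /= eqxx bitnE.
- have -> : (val i == val P) = false by apply/eqP => h; apply: h1; apply: val_inj.
  have -> : (val i == (val P).+1) = false.
    by apply/eqP => h; apply: h2; apply: val_inj; rewrite h hP.
  done.
Qed.

Lemma Phi_apply (F : fieldType) (q : F) n (P P1 : 'I_n) t :
  (0 < t)%N -> val P = t.-1 -> val P1 = t -> forall (y : tensor F n) b,
  Phi q t y b =
  if b P then (if b P1 then - q^-1 * y b else y (sw P P1 b))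
  else (if b P1 then y (sw P P1 b) + (q - q^-1) * y b else q * y b).
Proof.
move=> t0 hP hP1 y b.
have hPP : val P1 = (val P).+1 by rewrite hP hP1 prednK.
rewrite /Phi sum_ffunE.
pose al (a : idx n) : F := if a P then (if a P1 then - q^-1 else 0)
   else (if a P1 then q - q^-1 else q).
pose be (a : idx n) : F := if a P (+) a P1 then 1 else 0.
transitivity (\sum_a (y a * ((a == b)%:R * al a) + y a * ((a == sw P P1 b)%:R * be a))).
  apply: eq_bigr => a _; rewrite ffunE -mulrDr; congr (_ * _).
  rewrite /Rcheck_basis -hP -hP1 !bitnE (swapnE (P1:=P1)) //.
  have Esw : (b == sw P P1 a) = (a == sw P P1 b).
    apply/eqP/eqP => [->|->]; by rewrite swK.
  rewrite /al /be; case: (a P); case: (a P1); rewrite /basisT /= ?ffunE ?Esw ?(eq_sym b a).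
  all: rewrite ?ffunE ?Esw ?(eq_sym b a).
  all: rewrite ?mulr0 ?mulr1 ?addr0 ?add0r //.
  - exact: mulrC.
  - by rewrite [RHS]addrC; congr (_ + _); exact: mulrC.
  - exact: mulrC.
rewrite big_split /=.
rewrite (bigD1 b) //= big1 => [|a /negbTE ->]; last by rewrite mul0r mulr0.
rewrite (bigD1 (sw P P1 b)) //= big1 => [|a /negbTE ->]; last by rewrite mul0r mulr0.
rewrite !eqxx !addr0 !mul1r /al /be !ffunE tpermL tpermR.
case: (b P); case: (b P1); rewrite /= ?mulr0 ?addr0 ?add0r ?mulr1 //.
- exact: mulrC.
- by rewrite [RHS]addrC; congr (_ + _); exact: mulrC.
- exact: mulrC.
Qed.


Lemma val_tperm n (P P1 w : 'I_n) : P != P1 ->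
  val (tperm P P1 w) = if val w == val P then val P1
                       else if val w == val P1 then val P else val w.
Proof.
move=> PP1; case: (tpermP P P1 w) => [->|->|h1 h2]; first by rewrite eqxx.
  by rewrite eq_sym val_eqE (negbTE PP1) eqxx.
by rewrite !val_eqE; move/eqP/negbTE: h1 => ->; move/eqP/negbTE: h2 => ->.
Qed.

Lemma tperm_mono n (P P1 u v : 'I_n) : val P1 = (val P).+1 ->
  (u < v)%N -> ((u != P) && (v != P)) || ((u != P1) && (v != P1)) ->
  (tperm P P1 u < tperm P P1 v)%N.
Proof.
move=> hPP uv h.
have PP1 : P != P1 by rewrite -val_eqE hPP /= eqn_leq ltnn andbF.
rewrite !val_tperm // hPP.
move: h; rewrite -!val_eqE /= hPP.
have vp : val P = nat_of_ord P by [].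
have vu : val u = nat_of_ord u by [].
have vv : val v = nat_of_ord v by [].
move: uv vp vu vv; move: (val P) (val u) (val v) (nat_of_ord u) (nat_of_ord v) (nat_of_ord P) => p1 u1 v1 u' v' p uv vp vu vv.
do ! (case: eqP => /= ?); lia.
Qed.

Lemma coordU_Phi (F : fieldType) (q : F) n (P P1 : 'I_n) t :
  (0 < t)%N -> val P = t.-1 -> val P1 = t -> forall (y : tensor F n) i,
  coordU (Phi q t y) i =
  if i == P then coordU y P1
  else if i == P1 then coordU y P + (q - q^-1) * coordU y P1 else q * coordU y i.
Proof.
move=> t0 hP hP1 y i.
have hPP : val P1 = (val P).+1 by rewrite hP hP1 prednK.
have PP1 : P != P1 by rewrite -val_eqE hPP /= eqn_leq ltnn andbF.
rewrite /coordU (Phi_apply q t0 hP hP1).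
have swd : forall j, sw P P1 (delta j) = delta (tperm P P1 j).
  move=> j; apply/ffunP => w; rewrite !ffunE.
  apply/eqP/eqP => [<-|->]; by rewrite tpermK.
rewrite !swd !ffunE.
case: (eqVneq i P) => [->|iP]; first by rewrite eq_sym (negbTE PP1) tpermL.
case: (eqVneq i P1) => [->|iP1]; first by rewrite tpermR.
by [] || rewrite eq_sym (negbTE iP1).
Qed.

Lemma wedgeE (F : fieldType) n k (x : 'I_k -> tensor F n) (I : {set 'I_n}) (e : #|I| = k) :
  wedge x I = \det (\matrix_(j, l) coordU (x j) (enum_val (cast_ord (esym e) l))).
Proof.
rewrite ffunE; case: eqP => // e'; by rewrite (eq_irrelevance e e').
Qed.

Lemma wedge0 (F : fieldType) n k (x : 'I_k -> tensor F n) (I : {set 'I_n}) :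
  #|I| != k -> wedge x I = 0.
Proof. by move=> ne; rewrite ffunE; case: eqP => // e; rewrite e eqxx in ne. Qed.


Lemma wedge_Phi (F : fieldType) (q : F) n (P P1 : 'I_n) t k
  (x : 'I_k -> tensor F n) (S : {set 'I_n}) :
  q != 0 -> (0 < t)%N -> val P = t.-1 -> val P1 = t -> (0 < k)%N ->
  wedge (fun j => Phi q t (x j)) S = q ^+ k.-1 *
   (if P \in S then (if P1 \in S then - q^-1 * wedge x S else wedge x (tperm P P1 @^-1: S))
    else (if P1 \in S then wedge x (tperm P P1 @^-1: S) + (q - q^-1) * wedge x S
          else q * wedge x S)).
Proof.
move=> q0 t0 hP hP1 k0.
have hPP : val P1 = (val P).+1 by rewrite hP hP1 prednK.
have PP1 : P != P1 by rewrite -val_eqE hPP /= eqn_leq ltnn andbF.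
set g := tperm P P1.
have cS' : #|g @^-1: S| = #|S| by apply: card_preimset; exact: perm_inj.
case: (eqVneq #|S| k) => [e|ne]; last first.
  rewrite !wedge0 ?cS' //.
  by rewrite ?mulr0 ?addr0 !if_same mulr0.
pose en l := enum_val (cast_ord (esym e) l).
have enS l : en l \in S by exact: enum_valP.
have en_inj : injective en.
  by move=> l1 l2 h; apply: (cast_ord_inj (eq_n := esym e)); exact: enum_val_inj h.
have pos : forall i, i \in S -> exists l, en l = i.
  move=> i iS; exists (cast_ord e (enum_rank_in iS i)).
  by rewrite /en cast_ordK enum_rankK_in.
rewrite (wedgeE _ e) (wedgeE x e).
set c := q - q^-1.
set M := \matrix_(j, l) coordU (x j) (enum_val (cast_ord (esym e) l)).
set X := \matrix_(j, l) (if en l == P then coordU (x j) P1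
   else if en l == P1 then coordU (x j) P + c * coordU (x j) P1
   else coordU (x j) (en l)).
set d := \row_(l < k) (if (en l == P) || (en l == P1) then 1 else q).
have -> : \matrix_(j, l) coordU (Phi q t (x j)) (enum_val (cast_ord (esym e) l))
          = X *m diag_mx d.
  apply/matrixP => j l; rewrite mul_mx_diag !mxE (coordU_Phi q t0 hP hP1) -/(en l).
  case: (en l == P); case: (en l == P1); rewrite /= ?mulr1 //; exact: mulrC.
rewrite det_mulmx det_diag.
have Hprod : forall A : {set 'I_k},
    (forall l, ((en l == P) || (en l == P1)) = (l \in A)) ->
    \prod_l d 0 l = q ^+ (k - #|A|).
  move=> A hA.
  rewrite (eq_bigr (fun l => if l \in A then 1 else q)); last by move=> l _; rewrite mxE hA.
  rewrite (bigID (fun l => l \in A)) /= big1 => [|l ->] //.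
  rewrite mul1r (eq_bigr (fun=> q)) => [|l /negbTE ->] //.
  rewrite prodr_const; congr (_ ^+ _).
  have h := cardC A; rewrite card_ord in h.
  have -> : #|(fun i : 'I_k => i \notin A)| = #|[predC A]| by apply: eq_card => i; rewrite !inE.
  apply/eqP; rewrite -(eqn_add2l #|A|) subnKC; first by rewrite h.
  by rewrite -[X in (_ <= X)%N]h leq_addr.
have wS' : (forall l1 l2 : 'I_k, (l1 < l2)%N ->
      ((en l1 != P) && (en l2 != P)) || ((en l1 != P1) && (en l2 != P1))) ->
    wedge x (g @^-1: S) = \det (\matrix_(j, l) coordU (x j) (g (en l))).
  move=> hc; have e' : #|g @^-1: S| = k by rewrite cS'.
  rewrite (wedgeE x e'); congr (\det _); apply/matrixP => j l; rewrite !mxE.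
  congr (coordU _ _); symmetry; apply: (enum_char (h := fun l => g (en l)) e').
  - by move=> l'; rewrite !inE tpermK.
  - move=> l1 l2 lt; apply: (tperm_mono (P:=P) (P1:=P1) (u:=en l1) (v:=en l2) hPP); [exact: enum_incr | exact: hc].
have MX : M = \matrix_(j, l) coordU (x j) (en l) by [].
case PS : (P \in S); case P1S : (P1 \in S).
- have [l0 el0] := pos P PS; have [l1 el1] := pos P1 P1S.
  have enP l : (en l == P) = (l == l0) by rewrite -el0 (inj_eq en_inj).
  have enP1 l : (en l == P1) = (l == l1) by rewrite -el1 (inj_eq en_inj).
  have l01 : l0 != l1 by apply/eqP => h; move: PP1; rewrite -el0 -el1 h eqxx.
  have k2 : (2 <= k)%N.
    by have := max_card [set l0; l1]; rewrite cards2 l01 card_ord.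
  rewrite (Hprod [set l0; l1]); last by move=> l; rewrite !inE enP enP1.
  rewrite cards2 l01.
  rewrite (det_col_lin (X := X) (X1 := \matrix_(j, l) coordU (x j) (g (en l)))
     (X2 := \matrix_(j, l) (if l == l1 then coordU (x j) P1 else X j l))
     (l0 := l1) (b := 1) (c := c)); first last.
  + by move=> j l ll1; rewrite !mxE (negbTE ll1).
  + move=> j l ll1; rewrite !mxE enP enP1 (negbTE ll1).
    case: (eqVneq l l0) => [->|ll0]; first by rewrite el0 tpermL.
    rewrite tpermD // eq_sym -?enP -?enP1 ?enP ?enP1 ?(negbTE ll0) ?(negbTE ll1) //.
  + move=> j; rewrite !mxE enP enP1 eqxx (eq_sym l1 l0) (negbTE l01) mul1r.
    have -> : g (en l1) = P by move: el1; rewrite /g => ->; apply: tpermR.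
    done.
  have -> : \det (\matrix_(j, l) (if l == l1 then coordU (x j) P1 else X j l)) = 0.
    rewrite -det_tr; apply: (determinant_alternate (i1 := l0) (i2 := l1)) => // j.
    by rewrite !mxE eqxx (negbTE l01) enP eqxx.
  have -> : \matrix_(j, l) coordU (x j) (g (en l)) = xcol l0 l1 M.
    apply/matrixP => j l; rewrite !mxE; congr (coordU _ _).
    case: (tpermP l0 l1 l) => [->|->|h0 h1].
    * by rewrite -/(en l1) el0 el1 /g tpermL.
    * by rewrite -/(en l0) el0 el1 /g tpermR.
    * rewrite -/(en l) /g tpermD // eq_sym ?enP ?enP1; apply/eqP => //.
  rewrite xcolE det_mulmx det_perm odd_tperm l01 /=.
  have -> : k.-1 = (k - 2).+1 by lia.
  rewrite [q ^+ _.+1]exprS; move: (q ^+ (k - 2)) => m.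
  by field.
- have [l0 el0] := pos P PS.
  have enP l : (en l == P) = (l == l0) by rewrite -el0 (inj_eq en_inj).
  have nP1 l : (en l == P1) = false.
    by apply/negbTE/eqP => h; move: (enS l); rewrite h P1S.
  rewrite (Hprod [set l0]); last by move=> l; rewrite !inE enP nP1 orbF.
  rewrite cards1 subn1.
  have -> : X = \matrix_(j, l) coordU (x j) (g (en l)).
    apply/matrixP => j l; rewrite !mxE nP1 enP.
    case: (eqVneq l l0) => [->|ll0]; first by rewrite el0 /g tpermL.
    by rewrite /g tpermD // eq_sym ?enP ?nP1.
  rewrite -wS'; first by rewrite mulrC.
  by move=> l1 l2 _; rewrite !nP1 orbT.
- have [l1 el1] := pos P1 P1S.
  have enP1 l : (en l == P1) = (l == l1) by rewrite -el1 (inj_eq en_inj).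
  have nP l : (en l == P) = false.
    by apply/negbTE/eqP => h; move: (enS l); rewrite h PS.
  rewrite (Hprod [set l1]); last by move=> l; rewrite !inE nP enP1.
  rewrite cards1 subn1.
  rewrite (det_col_lin (X := X) (X1 := \matrix_(j, l) coordU (x j) (g (en l)))
     (X2 := M) (l0 := l1) (b := 1) (c := c)); first last.
  + by move=> j l ll1; rewrite !mxE nP enP1 (negbTE ll1).
  + by move=> j l ll1; rewrite !mxE nP enP1 (negbTE ll1) /g tpermD // eq_sym ?nP ?enP1.
  + move=> j; rewrite !mxE nP enP1 eqxx mul1r.
    have -> : g (en l1) = P by move: el1; rewrite /g => ->; apply: tpermR.
    by rewrite -/(en l1) el1.
  rewrite -wS'; first by rewrite mul1r mulrC.
  by move=> l1' l2 _; rewrite !nP.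
- have nP l : (en l == P) = false.
    by apply/negbTE/eqP => h; move: (enS l); rewrite h PS.
  have nP1 l : (en l == P1) = false.
    by apply/negbTE/eqP => h; move: (enS l); rewrite h P1S.
  rewrite (Hprod set0); last by move=> l; rewrite inE nP nP1.
  rewrite cards0 subn0.
  have -> : X = M by apply/matrixP => j l; rewrite !mxE nP nP1.
  by rewrite mulrA -exprSr prednK // mulrC.
Qed.

Unset Implicit Arguments.
Set Strict Implicit.

Theorem proposition1p3 (n : nat) (hn : (2 <= n)%N)
  (k : nat) (hk : (1 <= k <= n.-1)%N)
  (t : nat) (ht : (1 <= t <= n.-1)%N)
  (N : nat) (x : 'I_N -> 'I_k -> tensor Cq n)
  (hx : forall m j, inH qC 1 (x m j)) :
  psi (\sum_(m < N) wedge (fun j => Phi qC t (x m j)))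
  = qC ^+ k.-1 *: Phi qC t (psi (\sum_(m < N) wedge (x m))).
Proof.
have q0 : qC != 0 by rewrite /qC tofrac_eq0 polyX_eq0.
have t0 : (0 < t)%N by lia.
have k0 : (0 < k)%N by lia.
have tn : (t < n)%N by lia.
have tn' : (t.-1 < n)%N by lia.
pose P : 'I_n := Ordinal tn'.
pose P1 : 'I_n := Ordinal tn.
have hP : val P = t.-1 by [].
have hP1 : val P1 = t by [].
apply/ffunP => a.
rewrite ffunE sum_ffunE ffunE (Phi_apply qC t0 hP hP1) !ffunE !sum_ffunE.
have -> : [set i | sw P P1 a i] = tperm P P1 @^-1: [set i | a i].
  by apply/setP => i; rewrite !inE ffunE.
set S := [set i | a i].
have aP : a P = (P \in S) by rewrite inE.
have aP1 : a P1 = (P1 \in S) by rewrite inE.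
under eq_bigr do rewrite (wedge_Phi (x _) S q0 t0 hP hP1 k0).
rewrite -mulr_sumr aP aP1; congr (_ * _).
case: (P \in S); case: (P1 \in S).
- by rewrite mulr_sumr.
- by [].
- by rewrite big_split /= mulr_sumr.
- by rewrite mulr_sumr.
Qed.
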